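(* Under the standing assumptions (A) below, let $\Omega'=\{t\in[0,L]:\tau(t)\ne\pm\lambda\}\cup\Omega$. Then $\Omega'\setminus\Omega$ is a discrete set.
   Context: Standing assumptions (A): $n\ge2$, $L>0$, $\beta\colon[0,L]\to(0,\infty)$ of bounded variation with $1/\beta$ bounded; $\tau\in W^{1,\infty}((0,L);S^{n-1})$ with $k=\operatorname{ess\,sup}|\tau'|>0$; $\lambda\in S^{n-1}$ and $u\in W^{1,\infty}((0,L);\mathbb{R}^n)\setminus\{0\}$ such that $u'+(u\cdot\tau')\tau=\beta(\lambda-(\lambda\cdot\tau)\tau)$ and $|u|\tau'=ku$ a.e. in $(0,L)$; $f=k|u|$, which then satisfies $f'=\beta\,\lambda\cdot\tau'$ and $f(\tau''+k^2\tau)=\beta k^2\,\mathrm{proj}^\perp_{\tau,\tau'}(\lambda)$ weakly in $(0,L)$ (where $\mathrm{proj}^\perp_{V,W}$ is the orthogonal projection onto the orthogonal complement of $\mathrm{span}\{V,W\}$); $\Omega=\{t\in[0,L]:f(t)>0\}$ (open relative to $[0,L]$); and $\tau(t),\tau'(t),\lambda$ are linearly dependent for every $t\in\Omega$ (note $\tau'$ is continuous on $\Omega$). *)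

(* Defs.v *)
From Stdlib Require Import Reals Lra List.
Open Scope R_scope.

(* Vectors of R^n are represented as functions nat -> R; only the
   components with index i < n are meaningful. *)
Definition Vec := nat -> R.

Fixpoint vsum (n : nat) (f : nat -> R) : R :=
  match n with O => 0 | S m => vsum m f + f m end.

Definition dot (n : nat) (x y : Vec) : R := vsum n (fun i => x i * y i).
Definition vnorm (n : nat) (x : Vec) : R := sqrt (dot n x x).

Definition on_sphere (n : nat) (x : Vec) : Prop := vnorm n x = 1.

Definition lin_dep3 (n : nat) (x y z : Vec) : Prop :=
  exists a b c : R, (a <> 0 \/ b <> 0 \/ c <> 0) /\
    forall i, (i < n)%nat -> a * x i + b * y i + c * z i = 0.

Definition null_set (A : R -> Prop) : Prop :=
  forall eps, 0 < eps ->
    exists a b : nat -> R,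
      (forall j, a j <= b j) /\
      (forall t, A t -> exists j, a j < t < b j) /\
      (forall N, sum_f_R0 (fun j => b j - a j) N <= eps).

Definition ae_on (L : R) (P : R -> Prop) : Prop :=
  null_set (fun t => 0 < t < L /\ ~ P t).

Definition is_ess_sup (L : R) (g : R -> R) (k : R) : Prop :=
  ae_on L (fun t => g t <= k) /\
  forall c, c < k -> ~ null_set (fun t => 0 < t < L /\ c < g t).

(* Lipschitz on [0,L] (= W^{1,infty}((0,L)) up to the continuous representative) *)
Definition lipschitz_on (n : nat) (L : R) (x : R -> Vec) : Prop :=
  exists M, forall s t i, 0 <= s <= L -> 0 <= t <= L -> (i < n)%nat ->
    Rabs (x s i - x t i) <= M * Rabs (s - t).

Definition vderiv_at (n : nat) (x : R -> Vec) (t : R) (D : Vec) : Prop :=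
  forall i, (i < n)%nat -> derivable_pt_lim (fun s => x s i) t (D i).

Definition vderiv_within (n : nat) (L : R) (x : R -> Vec) (t : R) (D : Vec) : Prop :=
  forall i, (i < n)%nat ->
    forall eps, 0 < eps -> exists delta, 0 < delta /\
      forall h, h <> 0 -> Rabs h < delta -> 0 <= t + h <= L ->
        Rabs ((x (t + h) i - x t i) / h - D i) < eps.

Fixpoint var_sum (b : R -> R) (l : list R) : R :=
  match l with
  | x :: ((y :: _) as r) => Rabs (b y - b x) + var_sum b r
  | _ => 0
  end.

Fixpoint increasing_list (l : list R) : Prop :=
  match l with
  | x :: ((y :: _) as r) => x <= y /\ increasing_list r
  | _ => True
  end.

Definition bounded_variation (L : R) (b : R -> R) : Prop :=
  exists M, forall l : list R, increasing_list l ->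
    (forall x, In x l -> 0 <= x <= L) -> var_sum b l <= M.

Definition discrete_set (S : R -> Prop) : Prop :=
  forall t, S t -> exists delta, 0 < delta /\
    forall s, S s -> Rabs (s - t) < delta -> s = t.

Definition f_of (n : nat) (k : R) (u : R -> Vec) (t : R) : R := k * vnorm n (u t).

Definition Omega (n : nat) (L k : R) (u : R -> Vec) (t : R) : Prop :=
  0 <= t <= L /\ 0 < f_of n k u t.

Definition vec_neq (n : nat) (x y : Vec) : Prop := exists i, (i < n)%nat /\ x i <> y i.

Definition Omega' (n : nat) (L k : R) (tau u : R -> Vec) (lam : Vec) (t : R) : Prop :=
  (0 <= t <= L /\ vec_neq n (tau t) lam /\ vec_neq n (tau t) (fun i => - lam i))
  \/ Omega n L k u t.

(* Main.v *)
Require Import Defs.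
From Stdlib Require Import Reals Lra Lia List Classical.
Open Scope R_scope.

Lemma sum_term_le (f : nat -> R) N j : (forall i, 0 <= f i) -> (j <= N)%nat -> f j <= sum_f_R0 f N.
Proof.
  intros Hf Hj. induction N as [|N IH].
  - assert (j = 0%nat) by lia. subst. simpl. lra.
  - simpl. destruct (Nat.eq_dec j (S N)) as [->|Hne].
    + assert (0 <= sum_f_R0 f N). { clear IH Hj. induction N; simpl; [apply Hf| specialize (Hf (S N)); lra]. }
      lra.
    + specialize (IH ltac:(lia)). specialize (Hf (S N)). lra.
Qed.

Lemma sum_mono_N (f : nat -> R) N N' : (forall i, 0 <= f i) -> (N <= N')%nat -> sum_f_R0 f N <= sum_f_R0 f N'.
Proof.
  intros Hf H. induction H. lra. simpl. specialize (Hf (S m)). lra.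
Qed.

Definition ilv (f g : nat -> R) (j : nat) : R :=
  if Nat.even j then f (Nat.div2 j) else g (Nat.div2 j).

Lemma ilv_even f g j : ilv f g (2*j) = f j.
Proof. unfold ilv. rewrite Nat.even_even, Nat.div2_even. reflexivity. Qed.
Lemma ilv_odd f g j : ilv f g (2*j+1) = g j.
Proof. unfold ilv. rewrite Nat.even_odd.
  replace (2*j+1)%nat with (S (2*j)) by lia. rewrite Nat.div2_succ_double. reflexivity. Qed.

Lemma sum_ilv (f g : nat -> R) N :
  sum_f_R0 (ilv f g) (2*N+1) = sum_f_R0 f N + sum_f_R0 g N.
Proof.
  induction N as [|N IH].
  - simpl. unfold ilv. simpl. ring.
  - replace (2 * S N + 1)%nat with (S (S (2*N+1))) by lia.
    rewrite !tech5, IH.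
    replace (S (2*N+1)) with (2 * S N)%nat by lia.
    replace (S (2 * S N)) with (2 * S N + 1)%nat by lia.
    rewrite ilv_even, ilv_odd. simpl. ring.
Qed.

Lemma null_union (A B : R -> Prop) : null_set A -> null_set B -> null_set (fun t => A t \/ B t).
Proof.
  intros HA HB eps Heps.
  destruct (HA (eps/2) ltac:(lra)) as [a1 [b1 [H1 [H2 H3]]]].
  destruct (HB (eps/2) ltac:(lra)) as [a2 [b2 [H4 [H5 H6]]]].
  exists (ilv a1 a2), (ilv b1 b2). split; [|split].
  - intro j. unfold ilv. destruct (Nat.even j); auto.
  - intros t [Ht|Ht].
    + destruct (H2 t Ht) as [j Hj]. exists (2*j)%nat. rewrite !ilv_even. exact Hj.
    + destruct (H5 t Ht) as [j Hj]. exists (2*j+1)%nat. rewrite !ilv_odd. exact Hj.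
  - intro N.
    assert (Hnn : forall i, 0 <= ilv b1 b2 i - ilv a1 a2 i).
    { intro i. unfold ilv. destruct (Nat.even i); [specialize (H1 (Nat.div2 i))|specialize (H4 (Nat.div2 i))]; lra. }
    apply Rle_trans with (sum_f_R0 (fun j => ilv b1 b2 j - ilv a1 a2 j) (2*N+1)).
    + apply sum_mono_N; auto. lia.
    + assert (E: sum_f_R0 (fun j => ilv b1 b2 j - ilv a1 a2 j) (2*N+1)
               = sum_f_R0 (ilv (fun j => b1 j - a1 j) (fun j => b2 j - a2 j)) (2*N+1)).
      { apply sum_eq. intros i _. unfold ilv. destruct (Nat.even i); reflexivity. }
      rewrite E, sum_ilv. specialize (H3 N). specialize (H6 N). lra.
Qed.

Lemma null_single (t0 : R) : null_set (fun t => t = t0).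
Proof.
  intros eps Heps.
  exists (fun j => match j with O => t0 - eps/4 | _ => 0 end),
         (fun j => match j with O => t0 + eps/4 | _ => 0 end).
  split; [|split].
  - intros [|j]; lra.
  - intros t ->. exists 0%nat. lra.
  - intro N. assert (sum_f_R0 (fun j => (match j with O => t0 + eps/4 | _ => 0 end) - (match j with O => t0 - eps/4 | _ => 0 end)) N = eps/2).
    { induction N. simpl. lra. simpl. simpl in IHN. rewrite IHN. lra. }
    lra.
Qed.

Lemma null_sub (A B : R -> Prop) : null_set A -> (forall t, B t -> A t) -> null_set B.
Proof.
  intros HA Hs eps He. destruct (HA eps He) as [a [b [H1 [H2 H3]]]].
  exists a, b. repeat split; auto.
Qed.

Lemma abs_le_bw x b : Rabs x <= b -> -b <= x <= b.
Proof. unfold Rabs; destruct (Rcase_abs x); lra. Qed.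
Lemma abs_lt_bw x b : Rabs x < b -> -b < x < b.
Proof. unfold Rabs; destruct (Rcase_abs x); lra. Qed.

Lemma mono_eta (g d : R -> R) (E : R -> Prop) (a b c M : R)
  (Hab : a < b) (Hc : 0 < c) (HM : 0 <= M) (HE : null_set E)
  (Hlip : forall s t, a <= s <= b -> a <= t <= b -> Rabs (g s - g t) <= M * Rabs (s - t))
  (Hder : forall t, a <= t <= b -> ~ E t -> derivable_pt_lim g t (d t) /\ c <= d t) eta : 0 < eta -> g b - g a >= c/2 * (b - a) - (M + c) * eta.
Proof.
  intros Heta.
  destruct (HE eta Heta) as [aa [bb [Hab' [Hcov Hsum]]]].
  set (l := fun j x => Rmax 0 (Rmin (bb j) x - Rmax (aa j) a)).
  set (K := M + c).
  set (Phi := fun N x => g x - g a - c/2 * (x - a) + K * sum_f_R0 (fun j => l j x) N).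
  set (Q := fun x => exists N, 0 <= Phi N x).
  assert (Hl0 : forall j x, 0 <= l j x) by (intros; unfold l; apply Rmax_l).
  assert (Hlmono : forall j x y, x <= y -> l j x <= l j y).
  { intros j x y Hxy. unfold l. apply Rle_max_compat_l.
    assert (Rmin (bb j) x <= Rmin (bb j) y).
    { unfold Rmin. destruct (Rle_dec (bb j) x); destruct (Rle_dec (bb j) y); lra. }
    lra. }
  assert (Hlstep : forall j x y, aa j <= x -> x <= y -> y <= bb j -> a <= x -> l j y - l j x = y - x).
  { intros j x y H1 H2 H3 H4. unfold l.
    rewrite (Rmin_right (bb j) x) by lra. rewrite (Rmin_right (bb j) y) by lra.
    assert (Rmax (aa j) a <= x) by (apply Rmax_lub; lra).
    rewrite (Rmax_right 0 (y - Rmax (aa j) a)) by lra.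
    rewrite (Rmax_right 0 (x - Rmax (aa j) a)) by lra. ring. }
  assert (Hlbd : forall j x, l j x <= bb j - aa j).
  { intros j x. unfold l. apply Rmax_lub. specialize (Hab' j). lra.
    assert (Rmin (bb j) x <= bb j) by apply Rmin_l. assert (aa j <= Rmax (aa j) a) by apply Rmax_l. lra. }
  assert (HK : M + c/2 <= K) by (unfold K; lra).
  assert (HsumN : forall N N' x, (N <= N')%nat -> Phi N x <= Phi N' x).
  { intros N N' x H. unfold Phi. assert (sum_f_R0 (fun j => l j x) N <= sum_f_R0 (fun j => l j x) N').
    apply sum_mono_N; auto. assert (0 <= K) by (unfold K; lra). nra. }
  assert (Hsumx : forall N x y, x <= y -> sum_f_R0 (fun j => l j x) N <= sum_f_R0 (fun j => l j y) N).
  { intros N x y H. apply sum_Rle. intros. auto. }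
  assert (Hgood : forall N x y, a <= x -> x <= y -> y <= b -> g y - g x >= c/2 * (y - x) -> Phi N x <= Phi N y).
  { intros N x y H1 H2 H3 H4. unfold Phi. specialize (Hsumx N x y H2).
    assert (0 <= K) by (unfold K; lra).
    assert (K * sum_f_R0 (fun j => l j x) N <= K * sum_f_R0 (fun j => l j y) N) by (apply Rmult_le_compat_l; lra).
    lra. }
  assert (Hbad : forall N j x y, (j <= N)%nat -> aa j <= x -> x <= y -> y <= bb j -> a <= x -> y <= b ->
             Phi N x <= Phi N y).
  { intros N j x y Hj H1 H2 H3 H4 H5. unfold Phi.
    assert (Hd : y - x <= sum_f_R0 (fun j => l j y) N - sum_f_R0 (fun j => l j x) N).
    { rewrite <- minus_sum. rewrite <- (Hlstep j x y) by auto.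
      apply (sum_term_le (fun i => l i y - l i x)). intro i. specialize (Hlmono i x y H2). lra. auto. }
    assert (Hg : Rabs (g y - g x) <= M * Rabs (y - x)) by (apply Hlip; lra).
    rewrite (Rabs_right (y - x)) in Hg by lra.
    assert (g y - g x >= - (M * (y - x))) by (apply abs_le_bw in Hg; lra).
    assert (0 <= y - x) by lra.
    nra. }
  assert (HQa : Q a).
  { exists 0%nat. unfold Phi. simpl. specialize (Hl0 0%nat a). assert (0 <= K) by (unfold K; lra). nra. }
  assert (Hright : forall x, a <= x < b -> Q x -> exists del, 0 < del /\ forall y, x < y < x + del -> Q y).
  { intros x Hx [N HN].
    destruct (Classical_Prop.classic (E x)) as [Ex|nEx].
    - destruct (Hcov x Ex) as [j Hj].
      exists (Rmin (bb j - x) (b - x)). split. apply Rmin_glb_lt; lra.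
      intros y Hy. assert (y < bb j /\ y < b) as [Hy1 Hy2].
      { split; [assert (Rmin (bb j - x) (b - x) <= bb j - x) by apply Rmin_l|
                assert (Rmin (bb j - x) (b - x) <= b - x) by apply Rmin_r]; lra. }
      exists (Nat.max N j). apply Rle_trans with (Phi (Nat.max N j) x).
      apply Rle_trans with (Phi N x); auto. apply HsumN; lia.
      apply (Hbad _ j); lra || lia.
    - destruct (Hder x ltac:(lra) nEx) as [Hd Hdc].
      destruct (Hd (c/2) ltac:(lra)) as [del Hdel].
      exists (Rmin del (b - x)). split. apply Rmin_glb_lt; [apply cond_pos|lra].
      intros y Hy. assert (y - x < del /\ y < b) as [Hy1 Hy2].
      { split; [assert (Rmin del (b - x) <= del) by apply Rmin_l|
                assert (Rmin del (b - x) <= b - x) by apply Rmin_r]; lra. }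
      exists N. apply Rle_trans with (Phi N x); auto. apply Hgood; try lra.
      specialize (Hdel (y - x) ltac:(lra) ltac:(rewrite Rabs_right; lra)).
      replace (x + (y - x)) with y in Hdel by ring.
      apply abs_lt_bw in Hdel. destruct Hdel as [Hq _].
      assert (c/2 < (g y - g x) / (y - x)) by lra.
      apply Rlt_le in H. apply Rle_ge.
      apply (Rmult_le_compat_r (y - x)) in H; [|lra].
      replace ((g y - g x) / (y - x) * (y - x)) with (g y - g x) in H by (field; lra). lra. }
  assert (Hleft : forall x, a < x <= b -> (forall y, a <= y < x -> Q y) -> Q x).
  { intros x Hx HQ.
    destruct (Classical_Prop.classic (E x)) as [Ex|nEx].
    - destruct (Hcov x Ex) as [j Hj].
      assert (Hm : Rmax (aa j) a < x) by (apply Rmax_lub_lt; lra).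
      set (y := (Rmax (aa j) a + x) / 2).
      assert (aa j <= Rmax (aa j) a /\ a <= Rmax (aa j) a) as [Hm1 Hm2] by (split; [apply Rmax_l|apply Rmax_r]).
      destruct (HQ y ltac:(unfold y; lra)) as [N HN].
      exists (Nat.max N j). apply Rle_trans with (Phi (Nat.max N j) y).
      apply Rle_trans with (Phi N y); auto. apply HsumN; lia.
      apply (Hbad _ j); unfold y; lra || lia.
    - destruct (Hder x ltac:(lra) nEx) as [Hd Hdc].
      destruct (Hd (c/2) ltac:(lra)) as [del Hdel].
      set (h := Rmin (del/2) ((x - a)/2)).
      assert (Hh1 : h <= del/2) by apply Rmin_l. assert (Hh2 : h <= (x-a)/2) by apply Rmin_r.
      assert (Hh0 : 0 < h) by (apply Rmin_glb_lt; [pose proof (cond_pos del)|]; lra).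
      destruct (HQ (x - h) ltac:(lra)) as [N HN].
      exists N. apply Rle_trans with (Phi N (x - h)); auto. apply Hgood; try lra.
      pose proof (cond_pos del).
      specialize (Hdel (-h) ltac:(lra) ltac:(rewrite Rabs_left; lra)).
      replace (x + - h) with (x - h) in Hdel by ring.
      apply abs_lt_bw in Hdel. destruct Hdel as [Hq _].
      assert (Hq2 : c/2 < (g (x - h) - g x) / - h) by lra.
      apply Rlt_le in Hq2.
      apply (Rmult_le_compat_r h) in Hq2; [|lra].
      unfold Rdiv in Hq2. replace (/ - h) with (- / h) in Hq2 by (field; lra).
      replace ((g (x - h) - g x) * - / h * h) with (- (g (x - h) - g x)) in Hq2 by (field; lra).
      replace (x - (x - h)) with h by ring. lra. }
  set (T := fun x => a <= x <= b /\ forall y, a <= y <= x -> Q y).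
  assert (HTb : bound T) by (exists b; intros x [Hx _]; lra).
  assert (HTa : exists x, T x).
  { exists a. split. lra. intros y Hy. replace y with a by lra. exact HQa. }
  destruct (completeness T HTb HTa) as [s [Hs1 Hs2]].
  assert (Has : a <= s) by (apply Hs1; destruct HTa; split; [lra|]; intros y Hy; replace y with a by lra; exact HQa).
  assert (Hsb : s <= b) by (apply Hs2; intros x [Hx _]; lra).
  assert (Hbelow : forall y, a <= y < s -> Q y).
  { intros y Hy. destruct (Classical_Prop.classic (exists x, T x /\ y < x)) as [[x [[_ Hx] Hyx]]|Hn].
    - apply Hx. lra.
    - exfalso. assert (s <= y). apply Hs2. intros x Tx. destruct (Rle_dec x y). auto.
      exfalso. apply Hn. exists x. split; auto. lra. lra. }
  assert (HQs : Q s).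
  { destruct (Req_dec s a) as [->|Hne]. exact HQa. apply Hleft. lra. exact Hbelow. }
  assert (Hsb' : s = b).
  { destruct (Req_dec s b) as [|Hne]; auto. exfalso.
    destruct (Hright s ltac:(lra) HQs) as [del [Hdel Hy]].
    set (z := Rmin (s + del/2) b).
    assert (z <= s + del/2) by apply Rmin_l. assert (z <= b) by apply Rmin_r.
    assert (s < z) by (apply Rmin_glb_lt; lra).
    assert (T z).
    { split. lra. intros y Hy'. destruct (Rlt_dec y s). apply Hbelow; lra.
      destruct (Req_dec y s). subst; auto. apply Hy. lra. }
    specialize (Hs1 z H2). lra. }
  subst s. destruct HQs as [N HN]. unfold Phi in HN.
  assert (sum_f_R0 (fun j => l j b) N <= eta).
  { apply Rle_trans with (sum_f_R0 (fun j => bb j - aa j) N); auto. apply sum_Rle; auto. }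
  assert (0 <= K) by (unfold K; lra). fold K. nra.
Qed.

Lemma mono (g d : R -> R) (E : R -> Prop) (a b c M : R)
  (Hab : a < b) (Hc : 0 < c) (HM : 0 <= M) (HE : null_set E)
  (Hlip : forall s t, a <= s <= b -> a <= t <= b -> Rabs (g s - g t) <= M * Rabs (s - t))
  (Hder : forall t, a <= t <= b -> ~ E t -> derivable_pt_lim g t (d t) /\ c <= d t) : g a < g b.
Proof.
  set (eta := c/4 * (b - a) / (M + c)).
  assert (Heta : 0 < eta) by (unfold eta; apply Rdiv_lt_0_compat; nra).
  pose proof (mono_eta g d E a b c M Hab Hc HM HE Hlip Hder eta Heta).
  assert ((M + c) * eta = c/4 * (b - a)) by (unfold eta; field; lra).
  nra.
Qed.



Lemma vsum_le n f h : (forall i, (i < n)%nat -> f i <= h i) -> vsum n f <= vsum n h.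
Proof. induction n; simpl; intros H. lra. specialize (IHn (fun i Hi => H i ltac:(lia))). specialize (H n ltac:(lia)). lra. Qed.

Lemma vsum_ext n f h : (forall i, (i < n)%nat -> f i = h i) -> vsum n f = vsum n h.
Proof. induction n; simpl; intros H. lra. rewrite IHn by (intros; apply H; lia). rewrite (H n) by lia. lra. Qed.

Lemma vsum_scal n c f : vsum n (fun i => c * f i) = c * vsum n f.
Proof. induction n; simpl. ring. rewrite IHn. ring. Qed.

Lemma vsum_minus n f h : vsum n f - vsum n h = vsum n (fun i => f i - h i).
Proof. induction n; simpl. ring. rewrite <- IHn. ring. Qed.

Lemma vsum_abs n f : Rabs (vsum n f) <= vsum n (fun i => Rabs (f i)).
Proof. induction n; simpl. rewrite Rabs_R0; lra.
  eapply Rle_trans. apply Rabs_triang. lra. Qed.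

Lemma vsum_bound n f B : (forall i, (i < n)%nat -> f i <= B) -> vsum n f <= INR n * B.
Proof. induction n; intros H. simpl. lra.
  specialize (IHn (fun i Hi => H i ltac:(lia))). specialize (H n ltac:(lia)).
  change (vsum (S n) f) with (vsum n f + f n). rewrite S_INR. lra. Qed.

Lemma vsum_nonneg n f : (forall i, (i < n)%nat -> 0 <= f i) -> 0 <= vsum n f.
Proof. induction n; simpl; intros H. lra. specialize (IHn (fun i Hi => H i ltac:(lia))). specialize (H n ltac:(lia)). lra. Qed.

Lemma vsum_term n f j : (forall i, (i < n)%nat -> 0 <= f i) -> (j < n)%nat -> f j <= vsum n f.
Proof. induction n; simpl; intros H Hj. lia.
  destruct (Nat.eq_dec j n) as [->|Hne].
  - pose proof (vsum_nonneg n f (fun i Hi => H i ltac:(lia))). lra.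
  - specialize (IHn (fun i Hi => H i ltac:(lia)) ltac:(lia)). specialize (H n ltac:(lia)). lra.
Qed.

Lemma dot_sq_nonneg n x : 0 <= dot n x x.
Proof. unfold dot. apply vsum_nonneg. intros. nra. Qed.

Lemma comp_sq_le n x j : (j < n)%nat -> x j * x j <= dot n x x.
Proof. intros. unfold dot. apply (vsum_term n (fun i => x i * x i)); auto. intros; nra. Qed.

Lemma comp_le_norm n x j : (j < n)%nat -> Rabs (x j) <= vnorm n x.
Proof. intros Hj. unfold vnorm. rewrite <- sqrt_Rsqr_abs. apply sqrt_le_1_alt.
  unfold Rsqr. apply comp_sq_le; auto. Qed.

Lemma vnorm_nonneg n x : 0 <= vnorm n x.
Proof. apply sqrt_pos. Qed.

Lemma sphere_dot n x : on_sphere n x -> dot n x x = 1.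
Proof. unfold on_sphere, vnorm. intros H.
  rewrite <- (sqrt_sqrt (dot n x x)) by apply dot_sq_nonneg. rewrite H. ring. Qed.

Lemma sphere_comp n x j : on_sphere n x -> (j < n)%nat -> Rabs (x j) <= 1.
Proof. intros H Hj. rewrite <- H. apply comp_le_norm; auto. Qed.

Lemma norm0_comp n x : vnorm n x <= 0 -> forall j, (j < n)%nat -> x j = 0.
Proof. intros H j Hj. pose proof (vnorm_nonneg n x).
  assert (dot n x x = 0).
  { apply sqrt_eq_0. apply dot_sq_nonneg. unfold vnorm in *. lra. }
  pose proof (comp_sq_le n x j Hj). nra. Qed.

Lemma dot_abs_bound n x y A B : (forall j, (j < n)%nat -> Rabs (x j) <= A) ->
  (forall j, (j < n)%nat -> Rabs (y j) <= B) -> 0 <= B -> Rabs (dot n x y) <= INR n * (A * B).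
Proof.
  intros Hx Hy HB. unfold dot. eapply Rle_trans. apply vsum_abs.
  apply vsum_bound. intros j Hj. rewrite Rabs_mult.
  specialize (Hx j Hj); specialize (Hy j Hj). pose proof (Rabs_pos (x j)); pose proof (Rabs_pos (y j)).
  nra.
Qed.


Theorem mainTheorem15
  (n : nat) (L : R) (beta : R -> R) (tau dtau u du : R -> Vec) (lam : Vec) (k : R)
  (Hn : (2 <= n)%nat)
  (HL : 0 < L)
  (Hbeta_pos : forall t, 0 <= t <= L -> 0 < beta t)
  (Hbeta_bv : bounded_variation L beta)
  (Hbeta_inv : exists C, forall t, 0 <= t <= L -> / beta t <= C)
  (Htau_lip : lipschitz_on n L tau)
  (Htau_sph : forall t, 0 <= t <= L -> on_sphere n (tau t))
  (Hdtau : ae_on L (fun t => vderiv_at n tau t (dtau t)))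
  (Hk : is_ess_sup L (fun t => vnorm n (dtau t)) k)
  (Hkpos : 0 < k)
  (Hlam : on_sphere n lam)
  (Hu_lip : lipschitz_on n L u)
  (Hu_nz : exists t i, 0 <= t <= L /\ (i < n)%nat /\ u t i <> 0)
  (Hdu : ae_on L (fun t => vderiv_at n u t (du t)))
  (Hode : ae_on L (fun t => forall i, (i < n)%nat ->
      du t i + dot n (u t) (dtau t) * tau t i
      = beta t * (lam i - dot n lam (tau t) * tau t i)))
  (Halign : ae_on L (fun t => forall i, (i < n)%nat ->
      vnorm n (u t) * dtau t i = k * u t i))
  (Hdep : forall t, Omega n L k u t ->
      forall D, vderiv_within n L tau t D -> lin_dep3 n (tau t) D lam) :
  discrete_set (fun t => Omega' n L k tau u lam t /\ ~ Omega n L k u t).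
Proof.
  destruct Htau_lip as [Mt0 HMt0].
  set (Mt := Rabs Mt0).
  assert (HMt : forall s t j, 0 <= s <= L -> 0 <= t <= L -> (j < n)%nat ->
            Rabs (tau s j - tau t j) <= Mt * Rabs (s - t)).
  { intros s t j H1 H2 H3. eapply Rle_trans. apply HMt0; auto.
    apply Rmult_le_compat_r. apply Rabs_pos. apply Rle_abs. }
  assert (HMtp : 0 <= Mt) by apply Rabs_pos. clearbody Mt. clear HMt0.
  destruct Hu_lip as [Mu0 HMu0].
  set (Mu := Rabs Mu0).
  assert (HMu : forall s t j, 0 <= s <= L -> 0 <= t <= L -> (j < n)%nat ->
            Rabs (u s j - u t j) <= Mu * Rabs (s - t)).
  { intros s t j H1 H2 H3. eapply Rle_trans. apply HMu0; auto.
    apply Rmult_le_compat_r. apply Rabs_pos. apply Rle_abs. }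
  assert (HMup : 0 <= Mu) by apply Rabs_pos. clearbody Mu. clear HMu0.
  destruct Hbeta_inv as [C HC].
  assert (HC0 : 0 < C).
  { specialize (HC 0 ltac:(lra)). specialize (Hbeta_pos 0 ltac:(lra)).
    pose proof (Rinv_0_lt_compat _ Hbeta_pos). lra. }
  assert (Hblb : forall t, 0 <= t <= L -> / C <= beta t).
  { intros t Ht. specialize (HC t Ht). specialize (Hbeta_pos t Ht).
    rewrite <- (Rinv_inv (beta t)). apply Rinv_le_contravar; auto.
    apply Rinv_0_lt_compat; auto. }
  assert (Hzero : forall t, ~ Omega n L k u t -> 0 <= t <= L -> forall j, (j < n)%nat -> u t j = 0).
  { intros t HnO Ht. apply norm0_comp.
    destruct (Rle_dec (vnorm n (u t)) 0) as [|Hgt]; auto. exfalso. apply HnO.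
    split; auto. unfold f_of. apply Rmult_lt_0_compat; lra. }
  assert (Hin : forall t, Omega' n L k tau u lam t -> ~ Omega n L k u t ->
     0 <= t <= L /\ vec_neq n (tau t) lam /\ vec_neq n (tau t) (fun i => - lam i)).
  { intros t [H|H] H'; [exact H|contradiction]. }
  unfold discrete_set. intros t0 [HO' HnO].
  destruct (Hin t0 HO' HnO) as [Ht0 [Hne1 Hne2]].
  set (D0 := dot n lam (tau t0)).
  assert (Hex : exists i, (i < n)%nat /\ lam i - D0 * tau t0 i <> 0).
  { apply NNPP. intro Hno.
    assert (Hall : forall j, (j < n)%nat -> lam j = D0 * tau t0 j).
    { intros j Hj. destruct (Req_dec (lam j - D0 * tau t0 j) 0). lra.
      exfalso. apply Hno. exists j. auto. }
    assert (Hdd : dot n lam lam = D0 * D0 * dot n (tau t0) (tau t0)).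
    { unfold dot. rewrite <- vsum_scal. apply vsum_ext. intros j Hj. rewrite Hall by auto. ring. }
    rewrite (sphere_dot n lam Hlam), (sphere_dot n _ (Htau_sph t0 Ht0)) in Hdd.
    assert (HD : (D0 - 1) * (D0 + 1) = 0) by lra.
    destruct (Rmult_integral _ _ HD) as [HD1|HD1].
    - destruct Hne1 as [j [Hj Hj']]. apply Hj'. rewrite Hall by auto. replace D0 with 1 by lra. ring.
    - destruct Hne2 as [j [Hj Hj']]. apply Hj'. rewrite Hall by auto. replace D0 with (-1) by lra. ring. }
  destruct Hex as [i [Hi Hw]].
  set (w := lam i - D0 * tau t0 i) in *.
  assert (Hw0 : 0 < Rabs w) by (apply Rabs_pos_lt; auto).
  set (sg := w / Rabs w).
  assert (Hsgw : sg * w = Rabs w).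
  { unfold sg. unfold Rabs. destruct (Rcase_abs w); field; lra. }
  assert (Hsg : Rabs sg = 1).
  { unfold sg. unfold Rdiv. rewrite Rabs_mult, Rabs_inv, Rabs_Rabsolu. field. lra. }
  clearbody sg.
  assert (Hnn : 0 <= INR n) by apply pos_INR.
  assert (HW : forall t, 0 <= t <= L ->
     sg * (lam i - dot n lam (tau t) * tau t i) >= Rabs w - 2 * INR n * Mt * Rabs (t - t0)).
  { intros t Ht.
    set (Dt := dot n lam (tau t)).
    assert (H1 : Rabs (Dt - D0) <= INR n * (1 * (Mt * Rabs (t - t0)))).
    { unfold Dt, D0, dot. rewrite vsum_minus.
      replace (vsum n (fun i0 => lam i0 * tau t i0 - lam i0 * tau t0 i0))
        with (dot n lam (fun j => tau t j - tau t0 j)).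
      apply dot_abs_bound. intros; apply (sphere_comp n); auto. intros; apply HMt; auto.
      apply Rmult_le_pos; auto; apply Rabs_pos.
      unfold dot. apply vsum_ext. intros; ring. }
    assert (H2 : Rabs D0 <= INR n * (1 * 1)).
    { apply dot_abs_bound; try lra; intros; apply (sphere_comp n); auto. }
    assert (H3 : Rabs (tau t i) <= 1) by (apply (sphere_comp n); auto).
    assert (H4 : Rabs (tau t i - tau t0 i) <= Mt * Rabs (t - t0)) by (apply HMt; auto).
    set (X := (Dt - D0) * tau t i + D0 * (tau t i - tau t0 i)).
    assert (HX : sg * (lam i - Dt * tau t i) = sg * w - sg * X) by (unfold X, w; ring).
    rewrite HX, Hsgw.
    assert (HsX : sg * X <= Rabs X).
    { eapply Rle_trans. apply Rle_abs. rewrite Rabs_mult, Hsg. lra. }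
    assert (HXb : Rabs X <= 2 * INR n * Mt * Rabs (t - t0)).
    { unfold X. eapply Rle_trans. apply Rabs_triang. rewrite !Rabs_mult.
      pose proof (Rabs_pos (Dt - D0)). pose proof (Rabs_pos (tau t i)).
      pose proof (Rabs_pos D0). pose proof (Rabs_pos (tau t i - tau t0 i)).
      pose proof (Rabs_pos (t - t0)).
      assert (Rabs (Dt - D0) * Rabs (tau t i) <= INR n * (Mt * Rabs (t - t0))).
      { replace (INR n * (Mt * Rabs (t - t0))) with ((INR n * (1 * (Mt * Rabs (t - t0)))) * 1) by ring.
        apply Rmult_le_compat; auto. }
      assert (Rabs D0 * Rabs (tau t i - tau t0 i) <= INR n * (Mt * Rabs (t - t0))).
      { replace (INR n * (Mt * Rabs (t - t0))) with ((INR n * (1 * 1)) * (Mt * Rabs (t - t0))) by ring.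
        apply Rmult_le_compat; auto. }
      lra. }
    lra. }
  assert (HP : forall t, 0 <= t <= L -> vnorm n (dtau t) <= k ->
     Rabs (dot n (u t) (dtau t)) <= INR n * (Mu * Rabs (t - t0) * k)).
  { intros t Ht Hd. apply dot_abs_bound.
    - intros j Hj. replace (u t j) with (u t j - u t0 j) by (rewrite (Hzero t0 HnO Ht0 j Hj); ring). apply HMu; auto.
    - intros j Hj. eapply Rle_trans. apply (comp_le_norm n); auto. auto.
    - lra. }
  set (A1 := 2 * INR n * Mt + 1).
  set (A2 := INR n * Mu * k + 1).
  assert (HA1 : 0 < A1) by (unfold A1; nra).
  assert (HA2 : 0 < A2) by (unfold A2; assert (0 <= INR n * Mu) by nra; nra).
  set (del := Rmin (Rabs w / (2 * A1)) (Rabs w / (4 * C * A2))).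
  assert (Hdel1 : del <= Rabs w / (2 * A1)) by apply Rmin_l.
  assert (Hdel2 : del <= Rabs w / (4 * C * A2)) by apply Rmin_r.
  assert (Hdel0 : 0 < del).
  { apply Rmin_glb_lt; apply Rdiv_lt_0_compat; auto; nra. }
  set (cc := Rabs w / (4 * C)).
  assert (Hcc : 0 < cc) by (apply Rdiv_lt_0_compat; lra).
  assert (Hderbd : forall t, 0 <= t <= L -> Rabs (t - t0) < del ->
      (forall i, (i < n)%nat -> du t i + dot n (u t) (dtau t) * tau t i
            = beta t * (lam i - dot n lam (tau t) * tau t i)) ->
      vnorm n (dtau t) <= k -> cc <= sg * du t i).
  { intros t Ht Hr Hod Hdk.
    specialize (Hod i Hi).
    set (W := lam i - dot n lam (tau t) * tau t i) in *.
    set (P := dot n (u t) (dtau t)) in *.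
    assert (Hdu' : sg * du t i = beta t * (sg * W) - sg * (P * tau t i)) by (replace (du t i) with (beta t * W - P * tau t i) by lra; ring).
    rewrite Hdu'.
    pose proof (HW t Ht) as HWt. fold W in HWt.
    pose proof (Rabs_pos (t - t0)) as Hr0.
    assert (HA1d : A1 * del <= Rabs w / 2).
    { apply (Rmult_le_compat_l A1) in Hdel1; [|lra].
      replace (A1 * (Rabs w / (2 * A1))) with (Rabs w / 2) in Hdel1 by (field; lra). lra. }
    assert (HA2d : A2 * del <= Rabs w / (4 * C)).
    { apply (Rmult_le_compat_l A2) in Hdel2; [|lra].
      replace (A2 * (Rabs w / (4 * C * A2))) with (Rabs w / (4 * C)) in Hdel2 by (field; lra). lra. }
    assert (HsW : Rabs w / 2 <= sg * W).
    { assert (2 * INR n * Mt * Rabs (t - t0) <= A1 * del).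
      { apply Rmult_le_compat; try lra. nra. unfold A1; lra. }
      lra. }
    assert (Hb : / C * (Rabs w / 2) <= beta t * (sg * W)).
    { apply Rmult_le_compat; try lra. apply Rlt_le, Rinv_0_lt_compat; lra. auto. }
    assert (HPb : sg * (P * tau t i) <= Rabs w / (4 * C)).
    { eapply Rle_trans. apply Rle_abs. rewrite !Rabs_mult, Hsg.
      assert (Rabs (tau t i) <= 1) by (apply (sphere_comp n); auto).
      pose proof (HP t Ht Hdk) as HPt. fold P in HPt.
      pose proof (Rabs_pos P). pose proof (Rabs_pos (tau t i)).
      assert (INR n * (Mu * Rabs (t - t0) * k) <= A2 * del).
      { replace (INR n * (Mu * Rabs (t - t0) * k)) with ((INR n * Mu * k) * Rabs (t - t0)) by ring.
        apply Rmult_le_compat; try lra. assert (0 <= INR n * Mu) by nra. nra. unfold A2; lra. }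
      nra. }
    assert (/ C * (Rabs w / 2) = 2 * cc) by (unfold cc; field; lra).
    unfold cc in *. lra. }
  set (E := fun t => t = 0 \/ t = L \/
      ((0 < t < L /\ ~ vderiv_at n u t (du t)) \/
      ((0 < t < L /\ ~ (forall i, (i < n)%nat -> du t i + dot n (u t) (dtau t) * tau t i
            = beta t * (lam i - dot n lam (tau t) * tau t i))) \/
       (0 < t < L /\ ~ (vnorm n (dtau t) <= k))))).
  assert (HE : null_set E).
  { unfold E. apply null_union. apply null_single. apply null_union. apply null_single.
    apply null_union. exact Hdu. apply null_union. exact Hode. exact (proj1 Hk). }
  assert (Hcore : forall a b, 0 <= a -> a < b -> b <= L -> (forall t, a <= t <= b -> Rabs (t - t0) < del) ->
            sg * u a i < sg * u b i).
  { intros a b Ha Hab Hb Hr.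
    apply (mono (fun t => sg * u t i) (fun t => sg * du t i) E a b cc Mu); auto.
    - intros s t Hs Ht. replace (sg * u s i - sg * u t i) with (sg * (u s i - u t i)) by ring.
      rewrite Rabs_mult, Hsg, Rmult_1_l. apply HMu; auto; lra.
    - intros t Ht HnE. unfold E in HnE.
      assert (Htt : 0 < t < L).
      { split; [destruct (Req_dec t 0); [tauto|lra] | destruct (Req_dec t L); [tauto|lra]]. }
      assert (P1 : vderiv_at n u t (du t)) by (apply NNPP; intro; tauto).
      assert (P2 : forall i, (i < n)%nat -> du t i + dot n (u t) (dtau t) * tau t i
            = beta t * (lam i - dot n lam (tau t) * tau t i)) by (apply NNPP; intro; tauto).
      assert (P3 : vnorm n (dtau t) <= k) by (apply NNPP; intro; tauto).
      split.
      + apply (derivable_pt_lim_scal (fun s => u s i)). apply P1; auto.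
      + apply Hderbd; auto; lra. }
  exists del. split; auto.
  intros s [HO's HnOs] Hs.
  destruct (Hin s HO's HnOs) as [Hs0 _].
  pose proof (Hzero s HnOs Hs0 i Hi) as Hus. pose proof (Hzero t0 HnO Ht0 i Hi) as Hut.
  destruct (Rtotal_order s t0) as [Hlt|[Heq|Hgt]]; auto; exfalso.
  - assert (sg * u s i < sg * u t0 i).
    { apply Hcore; try lra. intros t Ht. eapply Rle_lt_trans; [|exact Hs].
      rewrite !Rabs_left1 by lra. lra. }
    rewrite Hus, Hut in H. lra.
  - assert (sg * u t0 i < sg * u s i).
    { apply Hcore; try lra. intros t Ht. eapply Rle_lt_trans; [|exact Hs].
      rewrite !Rabs_right by lra. lra. }
    rewrite Hus, Hut in H. lra.
Qed.
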